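(* Fix $0<b<1$. For $\lambda>0$ let $s_\lambda$ be a minimizer of $$J_\lambda[s]=2\pi\int_b^1\Big(s'^2+\frac{4s^2}{r^2}+\frac{\lambda}{4}(2s^2-1)^2\Big)r\,dr$$ over $s\in H^1(b,1)$ with $s(b)=s(1)=\frac1{\sqrt2}$. Then $s_\lambda\to\frac1{\sqrt2}$ uniformly on $[b,1]$ as $\lambda\to\infty$.
   Context: Here $\lambda=|A|/L$, where $A<0$ is the (rescaled) temperature parameter and $L>0$ the elastic constant of the Landau–de Gennes model; $s_\lambda$ is the scalar order parameter of the defect-free state $Q^*=s_\lambda(r)(\mathbf n\otimes\mathbf n-\mathbf m\otimes\mathbf m)$ on the annulus $b\le r\le1$, and it is a nonnegative classical solution of $s''+s'/r-4s/r^2=\lambda s(2s^2-1)$. *)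

(* Defs.v *)
From HB Require Import structures.
From mathcomp Require Import all_boot all_order all_algebra.
From mathcomp Require Import all_classical all_reals all_analysis.
Set Implicit Arguments. Unset Strict Implicit. Unset Printing Implicit Defensive.
Import Order.TTheory GRing.Theory Num.Theory.
Import numFieldNormedType.Exports.
Local Open Scope classical_set_scope.
Local Open Scope ring_scope.

Section Defs.
Variable R : realType.
Local Notation mu := (@lebesgue_measure R).

(* s belongs to H^1(b,1) with weak derivative g: g is square-integrable on
   [b,1] (hence integrable, the interval being bounded) and
   s(x) = s(b) + int_b^x g for every x in [b,1] (absolute continuity). *)
Definition H1_with_deriv (b : R) (s g : R -> R) : Prop :=
  measurable_fun `[b, 1] g /\
  mu.-integrable `[b, 1] (fun x => ((g x) ^+ 2)%:E) /\
  forall x, b <= x <= 1 ->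
    ((s x)%:E = (s b)%:E + \int[mu]_(t in `[b, x]%classic) (g t)%:E)%E.

Definition J_energy (b lam : R) (s g : R -> R) : \bar R :=
  ((2 * pi)%:E *
   \int[mu]_(r in `[b, 1%R])
      ((((g r) ^+ 2 + 4 * (s r) ^+ 2 / r ^+ 2
         + lam / 4 * (2 * (s r) ^+ 2 - 1) ^+ 2) * r)%:E))%E.

Definition bdry_val : R := (Num.sqrt 2)^-1.

Definition is_minimizer (b lam : R) (s : R -> R) : Prop :=
  exists g, H1_with_deriv b s g /\ s b = bdry_val /\ s 1 = bdry_val /\
    forall t h, H1_with_deriv b t h -> t b = bdry_val -> t 1 = bdry_val ->
      (J_energy b lam s g <= J_energy b lam t h)%E.

End Defs.

(* Main.v *)
Require Import Defs.
From mathcomp Require Import all_boot all_order all_algebra.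
From mathcomp Require Import all_classical all_reals all_analysis.
From mathcomp Require Import ring lra.
Import Order.TTheory GRing.Theory Num.Theory.
Import numFieldNormedType.Exports.
Local Open Scope classical_set_scope.
Local Open Scope ring_scope.

Section H.
Variable R : realType.
Local Notation mu := (@lebesgue_measure R).

Lemma monoT (f1 f2 : R -> \bar R) :
  (forall x, (0 <= f1 x)%E) -> (forall x, (f1 x <= f2 x)%E) ->
  (\int[mu]_x f1 x <= \int[mu]_x f2 x)%E.
Proof.
move=> f10 f12.
have f20 : forall x, (0 <= f2 x)%E by move=> x; exact: le_trans (f10 x) (f12 x).
rewrite !ge0_integralTE//.
apply: le_ereal_sup => _ [h /= hf <-]; exists h => //= x.
exact: le_trans (hf x) (f12 x).
Qed.

Lemma monoD (A B : set R) (f1 f2 : R -> \bar R) :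
  A `<=` B ->
  (forall x, A x -> (0 <= f1 x)%E) -> (forall x, B x -> (0 <= f2 x)%E) ->
  (forall x, A x -> (f1 x <= f2 x)%E) ->
  (\int[mu]_(x in A) f1 x <= \int[mu]_(x in B) f2 x)%E.
Proof.
move=> AB f10 f20 f12.
rewrite [X in (X <= _)%E]integral_mkcond [X in (_ <= X)%E]integral_mkcond; apply: monoT => x; rewrite /patch.
- by case: ifP => // /set_mem /f10.
- case: ifP => [/set_mem Ax|_]; first by rewrite ifT ?inE; [exact: f12|exact: AB].
  by case: ifP => // /set_mem /f20.
Qed.

Lemma unif_within (f : R -> R) (A : set R) :
  (forall e, 0 < e -> exists2 d, 0 < d & forall x y, A x -> A y -> `|x - y| < d -> `|f x - f y| < e) ->
  {within A, continuous f}.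
Proof.
move=> H; apply/subspace_continuousP => x Ax.
apply/cvgrPdist_lt => e e0.
have [d d0 Hd] := H e e0.
rewrite near_withinE; near=> y => Ay.
rewrite /from_subspace; apply: Hd => //.
Unshelve. all: by end_near. Qed.

Lemma efin_sub {a c : R} {I : \bar R} : c%:E = (a%:E + I)%E -> I = (c - a)%:E.
Proof. by case: I => [r||] //= [->]; congr EFin; rewrite addrAC subrr add0r. Qed.

Lemma modul (b : R) (s g : R -> R) (K : R) : H1_with_deriv b s g ->
  (\int[mu]_(t in `[b, 1%R]) ((g t) ^+ 2)%:E <= K%:E)%E ->
  forall a, 0 < a -> forall x y, b <= y -> y <= x -> x <= 1 ->
  `|s x - s y| <= K / (2 * a) + a * (x - y) / 2.
Proof.
move=> [mg [ig hs]] hK a a0 x y hby yx x1.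
have bx : b <= x by exact: le_trans yx.
have y1 : y <= 1 by exact: le_trans x1.
have Ex := hs x; have Ey := hs y.
rewrite bx x1 /= in Ex; rewrite hby y1 /= in Ey.
have Ey' := efin_sub (Ey erefl).
have sub : `]y, x] `<=` `[b, 1].
  by move=> z /=; rewrite !in_itv /= => /andP[yz zx]; rewrite (le_trans hby (ltW yz)) (le_trans zx x1).
have mgs : measurable_fun `]y, x] g by apply: measurable_funS mg.
have Eu : `[b, x]%classic = `[b, y]%classic `|` `]y, x]%classic :> set R.
  by rewrite -itv_bndbnd_setU //= bnd_simp.
move: (Ex erefl); rewrite Eu integral_setU //; last 2 first.
- rewrite -Eu; apply/measurable_realfun.measurable_EFinP; apply: measurable_funS mg => //.
  by move=> z /=; rewrite !in_itv /= => /andP[-> zx]; rewrite (le_trans zx x1).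
- rewrite disj_set2E; apply/eqP/seteqP; split => z //=; rewrite !in_itv /=.
  by move=> [/andP[_ zy] /andP[yz _]]; move: (lt_le_trans yz zy); rewrite ltxx.
rewrite Ey' addeA -EFinD (addrC (s b)) subrK.
move/efin_sub => I2.
have ha2 : 0 <= (2 * a)^-1 by rewrite invr_ge0 mulr_ge0 // ltW.
have ha : 0 <= a / 2 by rewrite divr_ge0 // ltW.
have mI : measurable (`]y, x]%classic : set R) by [].
have h1 := le_abse_integral mu mI (proj2 (measurable_realfun.measurable_EFinP _ _) mgs).
rewrite I2 /= in h1.
have h2 : (\int[mu]_(t in `]y, x]) (`|g t|)%:E <=
   \int[mu]_(t in `]y, x]) (((2 * a)^-1 * g t ^+ 2)%:E + (a / 2)%:E))%E.
  apply: monoD => // t _.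
  - by rewrite -EFinD lee_fin addr_ge0 // mulr_ge0 // sqr_ge0.
  - rewrite -EFinD lee_fin -(real_normK (num_real (g t))) -subr_ge0.
    have -> : (2 * a)^-1 * `|g t| ^+ 2 + a / 2 - `|g t| = (`|g t| - a) ^+ 2 / (2 * a).
      by field; rewrite gt_eqF.
    by rewrite divr_ge0 ?sqr_ge0 // mulr_ge0 // ltW.
have mg2 : measurable_fun `]y, x] (fun t => g t ^+ 2) by exact: measurable_realfun.measurable_funX.
rewrite ge0_integralD // in h2; last 2 first.
- by move=> t _; rewrite lee_fin mulr_ge0 // sqr_ge0.
- apply/measurable_realfun.measurable_EFinP; apply: measurable_realfun.measurable_funM => //.
have e1 : (\int[mu]_(t in `]y, x]) ((2 * a)^-1 * g t ^+ 2)%:E =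
   \int[mu]_(t in `]y, x]) (((2*a)^-1)%:E * (g t ^+ 2)%:E))%E.
  by apply: eq_integral => t _; rewrite EFinM.
rewrite e1 in h2.
rewrite ge0_integralZl // in h2; last 2 first.
- exact/measurable_realfun.measurable_EFinP.
- by move=> t _; rewrite lee_fin sqr_ge0.
have h3 : (\int[mu]_(t in `]y, x]) (g t ^+ 2)%:E <= K%:E)%E.
  apply: le_trans hK; apply: monoD => //; by move=> t _; rewrite lee_fin ?sqr_ge0.
rewrite (integral_cst mu mI) in h2.
have hm : (mu `]y, x] <= (x - y)%:E)%E.
  rewrite lebesgue_measure_itv //=; case: ifP => _; first by rewrite -EFinD.
  by rewrite lee_fin subr_ge0.
rewrite -lee_fin; apply: le_trans h1 _; apply: le_trans h2 _.
rewrite EFinD; apply: leeD.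
- rewrite (mulrC K) EFinM; apply: lee_wpmul2l => //; by rewrite lee_fin.
- rewrite mulrAC EFinM; apply: le_trans (lee_wpmul2l _ hm) _; first by rewrite lee_fin.
  by rewrite EFinM.
Qed.


Lemma c2 : bdry_val R ^+ 2 = 2^-1.
Proof. by rewrite /bdry_val exprVn sqr_sqrtr. Qed.

Lemma F_ge0 (lam r gr sr : R) : 0 <= lam -> 0 <= r ->
  0 <= (gr ^+ 2 + 4 * sr ^+ 2 / r ^+ 2 + lam / 4 * (2 * sr ^+ 2 - 1) ^+ 2) * r.
Proof.
move=> l0 r0; apply: mulr_ge0 => //.
apply: addr_ge0; first apply: addr_ge0.
- exact: sqr_ge0.
- by apply: divr_ge0; [apply: mulr_ge0 => //; exact: sqr_ge0 | exact: sqr_ge0].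
- by apply: mulr_ge0; [apply: divr_ge0 | exact: sqr_ge0].
Qed.

Lemma energy (b lam : R) (s : R -> R) : 0 < b -> b < 1 -> 0 < lam ->
  is_minimizer b lam s -> exists g, H1_with_deriv b s g /\
  (\int[mu]_(t in `[b, 1%R]) ((g t) ^+ 2)%:E <= ((2 / b * (1 - b)) / b)%:E)%E /\
  (\int[mu]_(t in `[b, 1%R]) ((lam / 4 * (2 * (s t) ^+ 2 - 1) ^+ 2) * t)%:E
     <= (2 / b * (1 - b))%:E)%E.
Proof.
move=> b0 b1 l0 [g [Hg [sb [s1 Hmin]]]]; exists g; split => //.
set M0 := 2 / b * (1 - b).
have mI : measurable (`[b, 1%R]%classic : set R) by [].
have Hc : H1_with_deriv b (fun _ => bdry_val R) (fun _ => 0).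
  split; first exact: measurable_cst.
  split.
    rewrite (_ : (fun x : R => ((0:R) ^+ 2)%:E) = cst 0); first exact: integrable0.
    by apply/funext => x; rewrite expr0n.
  move=> x _; rewrite (_ : (fun t : R => (0:R)%:E) = cst 0) ?integral0 ?adde0 //.
have Js := Hmin _ _ Hc erefl erefl.
have Jc : (J_energy b lam (fun _ => bdry_val R) (fun _ => 0%R) <= (2 * pi)%:E * M0%:E)%E.
  rewrite /J_energy; apply: lee_wpmul2l; first by rewrite lee_fin mulr_ge0 // pi_ge0.
  apply: (@le_trans _ _ (\int[mu]_(t in `[b, 1%R]) (2 / b)%:E)%E).
    apply: monoD => // t /=; rewrite in_itv /= => /andP[bt t1].
    - by rewrite lee_fin F_ge0 // ?(ltW l0) // (le_trans (ltW b0)).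
    - by rewrite lee_fin divr_ge0 // ltW.
    - rewrite lee_fin c2.
      have t0 : 0 < t by exact: lt_le_trans bt.
      have -> : ((0:R) ^+ 2 + 4 * 2^-1 / t ^+ 2 + lam / 4 * (2 * 2^-1 - 1) ^+ 2) * t = 2 / t.
        by field; rewrite gt_eqF.
      by rewrite ler_wpM2l // lef_pV2 // posrE.
  have hm : mu `[b, 1%R] = (1 - b)%:E.
    by rewrite lebesgue_measure_itv //= ifT ?lte_fin // -EFinD.
  rewrite (integral_cst mu mI) (_ : (_ * _)%E = (2 / b)%:E * (1 - b)%:E)%E.
    by rewrite -EFinM.
  by congr (_ * _)%E; exact: hm.
have JM := le_trans Js Jc.
rewrite /J_energy lee_pmul2l // ?lte_fin ?mulr_gt0 ?pi_gt0 // in JM.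
have Fge : forall t, `[b, 1%R]%classic t -> (0 <= ((g t ^+ 2 + 4 * s t ^+ 2 / t ^+ 2 +
    lam / 4 * (2 * s t ^+ 2 - 1) ^+ 2) * t)%:E)%E.
  move=> t /=; rewrite in_itv /= => /andP[bt _].
  by rewrite lee_fin F_ge0 // ?(ltW l0) // (le_trans (ltW b0)).
split; last first.
  apply: le_trans JM; apply: monoD => // t /= ht.
  - move: ht; rewrite in_itv /= => /andP[bt _].
    rewrite lee_fin; apply: mulr_ge0; last exact: le_trans (ltW b0) bt.
    apply: mulr_ge0; [apply: divr_ge0 => //; exact: ltW | exact: sqr_ge0].
  - move: ht; rewrite in_itv /= => /andP[bt _].
    have t0 : 0 <= t by exact: le_trans (ltW b0) bt.
    rewrite lee_fin ler_wpM2r // lerDr; apply: addr_ge0; first exact: sqr_ge0.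
    by apply: divr_ge0; [apply: mulr_ge0 => //; exact: sqr_ge0 | exact: sqr_ge0].
have mg2 : measurable_fun `[b, 1%R] (fun t => g t ^+ 2).
  by apply: measurable_realfun.measurable_funX; case: Hg.
have H2 : (b%:E * \int[mu]_(t in `[b, 1%R]) (g t ^+ 2)%:E <= M0%:E)%E.
  rewrite -ge0_integralZl //; last 3 first.
  - exact/measurable_realfun.measurable_EFinP.
  - by move=> t _; rewrite lee_fin sqr_ge0.
  - by rewrite lee_fin ltW.
  apply: le_trans JM; apply: monoD => // t /= ht.
  - by rewrite -EFinM lee_fin mulr_ge0 ?sqr_ge0 // ltW.
  - move: ht; rewrite in_itv /= => /andP[bt _].
    have t0 : 0 <= t by exact: le_trans (ltW b0) bt.
    rewrite -EFinM lee_fin mulrDl; apply: (@le_trans _ _ (g t ^+ 2 * t)).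
      by rewrite mulrC; apply: ler_wpM2l => //; exact: sqr_ge0.
    rewrite -mulrDl; apply: ler_wpM2r => //; rewrite -addrA lerDl; apply: addr_ge0.
      by apply: divr_ge0; [apply: mulr_ge0 => //; exact: sqr_ge0 | exact: sqr_ge0].
    apply: mulr_ge0; last exact: sqr_ge0.
    by apply: divr_ge0 => //; exact: ltW.
set X := (\int[mu]_(t in _) _)%E in H2 *.
have -> : X = ((b^-1)%:E * (b%:E * X))%E by rewrite muleA -EFinM mulVf ?gt_eqF // mul1e.
rewrite (mulrC M0) EFinM; apply: lee_wpmul2l => //.
by rewrite lee_fin invr_ge0 ltW.
Qed.


Lemma umod (b K : R) (s g : R -> R) : 0 < K -> H1_with_deriv b s g ->
  (\int[mu]_(t in `[b, 1%R]) ((g t) ^+ 2)%:E <= K%:E)%E ->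
  forall e, 0 < e -> forall x y, b <= x -> x <= 1 -> b <= y -> y <= 1 ->
  `|x - y| < e ^+ 2 / K -> `|s x - s y| < e.
Proof.
move=> K0 Hg HK e e0.
suff W : forall x y, b <= y -> y <= x -> x <= 1 -> x - y < e ^+ 2 / K -> `|s x - s y| < e.
  move=> x y bx x1 hby y1; have [yx|xy] := leP y x.
    by rewrite ger0_norm ?subr_ge0 //; exact: W.
  rewrite ltr0_norm ?subr_lt0 // opprB distrC => h; apply: W => //; exact: ltW.
move=> x y hby yx x1 hxy.
have a0 : 0 < K / e by rewrite divr_gt0.
apply: le_lt_trans (modul b s g K Hg HK (K / e) a0 x y hby yx x1) _.
have P : K / (2 * (K / e)) = e / 2 by field; rewrite ?gt_eqF.
have Q : K / e * (x - y) < e.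
  have E : K / e * (e ^+ 2 / K) = e by field; rewrite ?gt_eqF.
  by rewrite -[X in _ < X]E ltr_pM2l.
rewrite P; lra.
Qed.

Lemma pointwise (c e sy sz : R) : c ^+ 2 = 2^-1 -> 0 <= c -> 0 < e -> e <= 4^-1 ->
  `|sy - c| = e -> `|sz - sy| < e / 2 -> e ^+ 2 / 4 <= (2 * sz ^+ 2 - 1) ^+ 2.
Proof.
move=> hc c0 e0 e4 hy hz.
have c2 : 2^-1 <= c by nra.
have A : e / 2 < `|sz - c|.
  have := ler_distD sz sy c; rewrite hy (distrC sy sz); lra.
have A2 : (e / 2) ^+ 2 <= (sz - c) ^+ 2.
  rewrite -(real_normK (num_real (sz - c))); nra.
have B : 2^-1 <= sz + c.
  have hy1 : `|sy - c| <= e by rewrite hy.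
  move/ler_normlP: hy1 => [h1 h2]; move/ltr_normlP: hz => [h3 h4]; lra.
have -> : 2 * sz ^+ 2 - 1 = 2 * (sz - c) * (sz + c).
  have E : 2 * (sz - c) * (sz + c) = 2 * sz ^+ 2 - 2 * c ^+ 2 by ring.
  by rewrite E hc mulfV.
have B2 : 4^-1 <= (sz + c) ^+ 2 by nra.
have -> : (2 * (sz - c) * (sz + c)) ^+ 2 = 4 * ((sz - c) ^+ 2 * (sz + c) ^+ 2) by ring.
have : (e / 2) ^+ 2 * 4^-1 <= (sz - c) ^+ 2 * (sz + c) ^+ 2.
  apply: ler_pM => //; try lra; exact: sqr_ge0.
lra.
Qed.

End H.

Theorem proposition4 (R : realType) (b : R) (hb0 : 0 < b) (hb1 : b < 1)
  (s : R -> R -> R)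
  (hmin : forall lam : R, 0 < lam -> is_minimizer b lam (s lam)) :
  forall eps : R, 0 < eps -> exists L : R, 0 < L /\
    forall lam : R, L < lam -> forall x : R, b <= x <= 1 ->
      `| s lam x - bdry_val R | < eps.
Proof.
move=> eps eps0.
set c := bdry_val R.
set M0 := 2 / b * (1 - b).
have M00 : 0 < M0 by rewrite mulr_gt0 ?divr_gt0 // subr_gt0.
set K := M0 / b.
have K0 : 0 < K by rewrite divr_gt0.
set e := Num.min eps 4^-1.
have e0 : 0 < e by rewrite lt_min eps0 invr_gt0 //=; lra.
have e4 : e <= 4^-1 by rewrite ge_min lexx orbT.
have ee : e <= eps by rewrite ge_min lexx.
set d := (e / 2) ^+ 2 / K.
have d0 : 0 < d by rewrite divr_gt0 // exprn_gt0 // divr_gt0.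
set dl := Num.min (d / 2) ((1 - b) / 2).
have dl0 : 0 < dl.
  rewrite lt_min; apply/andP; split; apply: divr_gt0 => //; lra.
have dld : dl < d by rewrite gt_min ltr_pdivrMr // ltr_pMr // ltr1n.
have dlb : dl <= (1 - b) / 2 by rewrite ge_min lexx orbT.
set P := (e ^+ 2 / 4) * b * dl / 4.
have P0 : 0 < P by rewrite !mulr_gt0 ?divr_gt0 ?exprn_gt0 ?invr_gt0.
exists (M0 / P + 1); split.
  by rewrite addr_gt0 // divr_gt0.
move=> lam Llam x /andP[bx x1].
have l0 : 0 < lam by apply: lt_trans Llam; rewrite addr_gt0 // divr_gt0.
have [g [Hg [HK Hlam]]] := energy _ _ _ _ hb0 hb1 l0 (hmin lam l0).
have um := umod _ _ _ _ _ K0 Hg HK.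
rewrite ltNge; apply/negP => Hx.
have [_ [_ [sb _]]] := hmin lam l0.
rewrite -/c in sb.
have hc2 : c ^+ 2 = 2^-1 by exact: c2.
have c0 : 0 <= c by rewrite /c /bdry_val invr_ge0 sqrtr_ge0.
have cont : {within `[b, x], continuous (s lam)}.
  apply: unif_within => e' e'0; exists (e' ^+ 2 / K); first by rewrite divr_gt0 // exprn_gt0.
  move=> z w /=; rewrite !in_itv /= => /andP[bz zx] /andP[bw wx].
  have z1 : z <= 1 by exact: le_trans zx x1.
  have w1 : w <= 1 by exact: le_trans wx x1.
  by apply: um.
have [y yI hy] : exists2 y, y \in `[b, x] & `|s lam y - c| = e.
  have [cx|xc] := leP c (s lam x).
  - have Hx' : eps <= s lam x - c by rewrite -(ger0_norm (x := s lam x - c)) // subr_ge0.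
    have hv : Num.min (s lam b) (s lam x) <= c + e <= Num.max (s lam b) (s lam x).
      rewrite sb ge_min le_max; apply/andP; split; apply/orP; [left|right]; lra.
    have [y yI hy] := @IVT R (s lam) b x (c + e) bx cont hv.
    by exists y => //; rewrite hy addrAC subrr add0r ger0_norm // ltW.
  - have Hx' : eps <= c - s lam x.
      by rewrite -opprB -(ltr0_norm (x := s lam x - c)) // subr_lt0.
    have hv : Num.min (s lam b) (s lam x) <= c - e <= Num.max (s lam b) (s lam x).
      rewrite sb ge_min le_max; apply/andP; split; apply/orP; [right|left]; lra.
    have [y yI hy] := @IVT R (s lam) b x (c - e) bx cont hv.
    by exists y => //; rewrite hy addrAC subrr add0r normrN ger0_norm // ltW.
move: yI; rewrite in_itv /= => /andP[yb yx].
have [u [bu u1 uy yu]] : exists u, [/\ b <= u, u + dl <= 1, u <= y & y <= u + dl].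
  have [h|h] := leP (y + dl) 1.
    by exists y; split => //; lra.
  by exists (y - dl); split; lra.
set k := lam / 4 * (e ^+ 2 / 4) * b.
have key : forall z, u <= z <= u + dl -> k <= lam / 4 * (2 * s lam z ^+ 2 - 1) ^+ 2 * z.
  move=> z /andP[uz zu].
  have bz : b <= z by lra.
  have z1 : z <= 1 by lra.
  have hz : `|s lam z - s lam y| < e / 2.
    apply: um => //; try lra.
    apply: le_lt_trans dld; rewrite ler_norml; apply/andP; split; lra.
  have := pointwise _ _ _ _ _ hc2 c0 e0 e4 hy hz => H.
  rewrite /k; apply: ler_pM => //.
  - by rewrite mulr_ge0 // divr_ge0 // ?sqr_ge0 // ltW.
  - exact: ltW.
  - by apply: ler_wpM2l => //; rewrite divr_ge0 // ltW.
have mIu : measurable (`[u, u + dl]%classic : set R) by [].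
have hm : (@lebesgue_measure R) `[u, u + dl] = dl%:E.
  by rewrite lebesgue_measure_itv //= ifT ?lte_fin ?ltrDl // -EFinD addrAC subrr add0r.
have Ic : (\int[lebesgue_measure]_(t in `[u, (u + dl)%R]) k%:E = (k * dl)%:E)%E.
  rewrite (integral_cst (@lebesgue_measure R) mIu) (EFinM k dl); congr (_ * _)%E; exact: hm.
have Hint : ((k * dl)%:E <= (2 / b * (1 - b))%:E)%E.
  rewrite -Ic; apply: le_trans Hlam; apply: monoD.
  - by move=> z /=; rewrite !in_itv /= => /andP[uz zu]; apply/andP; split; lra.
  - by move=> z _; rewrite lee_fin /k !mulr_ge0 ?divr_ge0 ?sqr_ge0 // ltW.
  - move=> z /=; rewrite in_itv /= => /andP[bz _]; rewrite lee_fin.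
    apply: mulr_ge0; last lra.
    by apply: mulr_ge0; [rewrite divr_ge0 // ltW | exact: sqr_ge0].
  - by move=> z /=; rewrite in_itv /= lee_fin => /key.
rewrite lee_fin in Hint.
have E : k * dl = lam * P by rewrite /k /P; ring.
rewrite E -/M0 in Hint.
have : lam <= M0 / P by rewrite ler_pdivlMr.
lra.
Qed.
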